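(* For $n\ge3$: $\mathrm{St}(\mathfrak a_0(n))=\{I,X\}^{\otimes n}\cup\{Y,Z\}^{\otimes n}$; $\mathrm{St}(\mathfrak a_2(n))=\{P_I,P_{XY},P_{YX},P_Z\}$; $\mathrm{St}(\mathfrak a_3(n))=\mathrm{St}(\mathfrak a_6(n))=\{P_I,P_X,P_{YZ},P_{ZY}\}$; $\mathrm{St}(\mathfrak a_4(n))=\mathrm{St}(\mathfrak a_7(n))=\{P_I,P_X,P_Y,P_Z\}$; $\mathrm{St}(\mathfrak a_5(n))=\mathrm{St}(\mathfrak a_{10}(n))=\{P_I,P_{XYZ},P_{YZX},P_{ZXY}\}$; $\mathrm{St}(\mathfrak a_8(n))=\{P_I,P_Y,X_1,ZY\cdots Y\}$ (the last being $Z$ followed by $n-1$ copies of $Y$); $\mathrm{St}(\mathfrak a_9(n))=\{P_I,X_1,Y_1X_2,Z_1X_2\}$; $\mathrm{St}(\mathfrak a_{13}(n))=\mathrm{St}(\mathfrak a_{20}(n))=\{P_I,P_X\}$; $\mathrm{St}(\mathfrak a_{14}(n))=\{P_I,P_Z\}$; $\mathrm{St}(\mathfrak a_{15}(n))=\mathrm{St}(\mathfrak b_2(n))=\mathrm{St}(\mathfrak b_4(n))=\{P_I,X_1\}$; $\mathrm{St}(\mathfrak b_0(n))=\mathrm{St}(\mathfrak b_1(n))=\{I,X\}^{\otimes n}$; $\mathrm{St}(\mathfrak a_k(n))=\mathrm{St}(\mathfrak b_3(n))=\{P_I\}$ for $k\in\{11,12,16,17,18,19,21,22\}$.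
   Context: Pauli matrices $I,X,Y,Z$; $\mathcal P_n$ is the set of length-$n$ Pauli strings $A^1\otimes\cdots\otimes A^n$, $A^j\in\{I,X,Y,Z\}$. $A_j$ denotes $A$ at position $j$ and $I$ elsewhere; $A_iB_j$ the string with $A$ at $i$, $B$ at $j$, $I$ elsewhere. For a word $w$ over $\{I,X,Y,Z\}$, $P_w\in\mathcal P_n$ is the periodic repetition $www\cdots$ truncated to length $n$ (e.g. $P_I=I^{\otimes n}$, $P_X=X^{\otimes n}$, $P_{YZ}=YZYZ\cdots$). The stabilizer $\mathrm{St}(\mathfrak s)$ of a set $\mathfrak s$ of matrices is the set of all $P\in\mathcal P_n$ commuting with every element of $\mathfrak s$. For a set $S$ of Pauli strings, $\mathrm{Lie}\langle S\rangle$ is the smallest real Lie subalgebra of $\mathfrak u(2^n)$ containing $\{iP:P\in S\}$; for a set $G$ of two-qubit strings, $G(n)=\mathrm{Lie}\langle A_jB_{j+1}: AB\in G,1\le j\le n-1\rangle$. Generating sets: $\mathfrak a_0=\{XX\}$, $\mathfrak a_2=\{XY,YX\}$, $\mathfrak a_3=\{XX,YZ\}$, $\mathfrak a_4=\{XX,YY\}$, $\mathfrak a_5=\{XY,YZ\}$, $\mathfrak a_6=\{XX,YZ,ZY\}$, $\mathfrak a_7=\{XX,YY,ZZ\}$, $\mathfrak a_8=\{XX,XZ\}$, $\mathfrak a_9=\{XY,XZ\}$, $\mathfrak a_{10}=\{XY,YZ,ZX\}$, $\mathfrak a_{11}=\{XY,YX,YZ\}$, $\mathfrak a_{12}=\{XX,XY,YZ\}$,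 $\mathfrak a_{13}=\{XX,YY,YZ\}$, $\mathfrak a_{14}=\{XX,YY,XY\}$, $\mathfrak a_{15}=\{XX,XY,XZ\}$, $\mathfrak a_{16}=\{XY,YX,YZ,ZY\}$, $\mathfrak a_{17}=\{XX,XY,ZX\}$, $\mathfrak a_{18}=\{XX,XZ,YY,ZY\}$, $\mathfrak a_{19}=\{XX,XY,ZX,YZ\}$, $\mathfrak a_{20}=\{XX,YY,ZZ,ZY\}$, $\mathfrak a_{21}=\{XX,YY,XY,ZX\}$, $\mathfrak a_{22}=\{XX,XY,XZ,YX\}$, $\mathfrak b_0=\{XI,IX\}$, $\mathfrak b_1=\{XX,XI,IX\}$, $\mathfrak b_2=\{XY,XI,IX\}$, $\mathfrak b_3=\{XI,YI,IX,IY\}$, $\mathfrak b_4=\{XX,XY,XI,IX\}$. *)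

(* Defs.v *)
From HB Require Import structures.
From mathcomp Require Import all_boot all_order all_algebra all_field.
Set Implicit Arguments. Unset Strict Implicit. Unset Printing Implicit Defensive.
Import Order.TTheory GRing.Theory Num.Theory.
Local Open Scope ring_scope.

Inductive pauli := pI | pX | pY | pZ.

Definition pauli_code (p : pauli) : 'I_4 :=
  match p with pI => inord 0 | pX => inord 1 | pY => inord 2 | pZ => inord 3 end.
Definition pauli_decode (i : 'I_4) : pauli :=
  match val i with 0 => pI | 1 => pX | 2 => pY | _ => pZ end%N.
Lemma pauli_codeK : cancel pauli_code pauli_decode.
Proof. by case; rewrite /pauli_decode /= inordK. Qed.
HB.instance Definition _ := Finite.copy pauli (can_type pauli_codeK).

Definition pstring (n : nat) := 'I_n -> pauli.

(* Single-qubit Pauli matrices, entries indexed by (row bit, column bit). *)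
Definition pmat (p : pauli) (a b : bool) : algC :=
  match p with
  | pI => if a == b then 1 else 0
  | pX => if a == b then 0 else 1
  | pY => if a == b then 0 else (if a then 'i else - 'i)
  | pZ => if a == b then (if a then -1 else 1) else 0
  end.

Definition qbit (i k : nat) : bool := odd (i %/ 2 ^ k).

(* The 2^n x 2^n matrix A^1 (x) ... (x) A^n (qubit k <-> bit k of the index). *)
Definition pmx n (P : pstring n) : 'M[algC]_(2 ^ n) :=
  \matrix_(i, j) \prod_(k < n) pmat (P k) (qbit i k) (qbit j k).

Definition skew_herm N (A : 'M[algC]_N) : Prop := (map_mx Num.conj A)^T = - A.

Definition lie_subalg N (L : 'M[algC]_N -> Prop) : Prop :=
  [/\ (forall A, L A -> skew_herm A),
      L 0,
      (forall A B, L A -> L B -> L (A + B)),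
      (forall (r : algC) A, r \is Num.real -> L A -> L (r *: A))
    & (forall A B, L A -> L B -> L (A *m B - B *m A))].

(* Lie<S>: the smallest real Lie subalgebra of u(2^n) containing iP, P in S. *)
Definition inLie n (S : pstring n -> Prop) (M : 'M[algC]_(2 ^ n)) : Prop :=
  forall L, lie_subalg L -> (forall P, S P -> L ('i *: pmx P)) -> L M.

Definition St n (s : 'M[algC]_(2 ^ n) -> Prop) (P : pstring n) : Prop :=
  forall M, s M -> pmx P *m M = M *m pmx P.

(* Generators A_j B_{j+1}, AB in G, 1 <= j <= n-1 (0-based: j.+1 < n). *)
Definition gen_set n (G : seq (pauli * pauli)) (P : pstring n) : Prop :=
  exists A B (j : nat), (A, B) \in G /\ (j.+1 < n)%N /\
    forall k : 'I_n, P k = (if val k == j then A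
                            else if val k == j.+1 then B else pI).

Definition Gn (G : seq (pauli * pauli)) n : 'M[algC]_(2 ^ n) -> Prop :=
  inLie (@gen_set n G).
Arguments Gn G n : clear implicits.

Definition isPw n (w : seq pauli) (P : pstring n) : Prop :=
  forall k : 'I_n, P k = nth pI w (k %% size w).

Definition letters_in n (A : seq pauli) (P : pstring n) : Prop :=
  forall k : 'I_n, P k \in A.

(* P agrees with the explicit word w (I-padded): e.g. X_1 = [:: pX], Y_1X_2 = [:: pY; pX]. *)
Definition isWord n (w : seq pauli) (P : pstring n) : Prop :=
  forall k : 'I_n, P k = nth pI w k.

Definition isZYY n (P : pstring n) : Prop :=
  forall k : 'I_n, P k = (if val k == 0%N then pZ else pY).

Definition a0  := [:: (pX,pX)].
Definition a2  := [:: (pX,pY); (pY,pX)].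
Definition a3  := [:: (pX,pX); (pY,pZ)].
Definition a4  := [:: (pX,pX); (pY,pY)].
Definition a5  := [:: (pX,pY); (pY,pZ)].
Definition a6  := [:: (pX,pX); (pY,pZ); (pZ,pY)].
Definition a7  := [:: (pX,pX); (pY,pY); (pZ,pZ)].
Definition a8  := [:: (pX,pX); (pX,pZ)].
Definition a9  := [:: (pX,pY); (pX,pZ)].
Definition a10 := [:: (pX,pY); (pY,pZ); (pZ,pX)].
Definition a11 := [:: (pX,pY); (pY,pX); (pY,pZ)].
Definition a12 := [:: (pX,pX); (pX,pY); (pY,pZ)].
Definition a13 := [:: (pX,pX); (pY,pY); (pY,pZ)].
Definition a14 := [:: (pX,pX); (pY,pY); (pX,pY)].
Definition a15 := [:: (pX,pX); (pX,pY); (pX,pZ)].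
Definition a16 := [:: (pX,pY); (pY,pX); (pY,pZ); (pZ,pY)].
Definition a17 := [:: (pX,pX); (pX,pY); (pZ,pX)].
Definition a18 := [:: (pX,pX); (pX,pZ); (pY,pY); (pZ,pY)].
Definition a19 := [:: (pX,pX); (pX,pY); (pZ,pX); (pY,pZ)].
Definition a20 := [:: (pX,pX); (pY,pY); (pZ,pZ); (pZ,pY)].
Definition a21 := [:: (pX,pX); (pY,pY); (pX,pY); (pZ,pX)].
Definition a22 := [:: (pX,pX); (pX,pY); (pX,pZ); (pY,pX)].
Definition b0  := [:: (pX,pI); (pI,pX)].
Definition b1  := [:: (pX,pX); (pX,pI); (pI,pX)].
Definition b2  := [:: (pX,pY); (pX,pI); (pI,pX)].
Definition b3  := [:: (pX,pI); (pY,pI); (pI,pX); (pI,pY)].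
Definition b4  := [:: (pX,pX); (pX,pY); (pX,pI); (pI,pX)].

(* Main.v *)
Require Import Defs.
From HB Require Import structures.
From mathcomp Require Import all_boot all_order all_algebra all_field.
From mathcomp Require Import ring.
Set Implicit Arguments. Unset Strict Implicit. Unset Printing Implicit Defensive.
Import Order.TTheory GRing.Theory Num.Theory.
Local Open Scope ring_scope.

Definition anti (a b : pauli) : bool :=
  match a, b with
  | pI, _ | _, pI => false
  | pX, pX | pY, pY | pZ, pZ => false
  | _, _ => true end.

Definition E n (p : nat -> pauli) (i j : nat) : algC :=
  \prod_(k < n) pmat (p k) (qbit i k) (qbit j k).
Definition S n (p q : nat -> pauli) (i j : nat) : algC :=
  \sum_(l < 2 ^ n) E n p i l * E n q l j.

Lemma qbit0 i : qbit i 0 = odd i.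
Proof. by rewrite /qbit expn0 divn1. Qed.
Lemma qbitS i k : qbit i k.+1 = qbit i./2 k.
Proof. by rewrite /qbit expnS divnMA divn2. Qed.

Lemma E_rec n p i j : E n.+1 p i j =
  pmat (p 0%N) (odd i) (odd j) * E n (fun k => p k.+1) i./2 j./2.
Proof.
rewrite /E big_ord_recl /= !qbit0; congr (_ * _).
by apply: eq_bigr => k _; rewrite /= !qbitS.
Qed.

Lemma sum2 (F : nat -> algC) m :
  \sum_(l < 2 * m) F l = \sum_(l < m) (F l.*2 + F l.*2.+1).
Proof.
rewrite -(big_mkord xpredT F) -(big_mkord xpredT (fun l => F l.*2 + F l.*2.+1)).
elim: m => [|m IH]; first by rewrite muln0 !big_nil.
have -> : (2 * m.+1 = (2 * m).+2)%N by rewrite mulnS.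
by rewrite !big_nat_recr //= IH -mul2n addrA.
Qed.

Definition M2 a b x y : algC := pmat a x false * pmat b false y + pmat a x true * pmat b true y.

Lemma S_rec n p q i j : S n.+1 p q i j =
  M2 (p 0%N) (q 0%N) (odd i) (odd j) *
  S n (fun k => p k.+1) (fun k => q k.+1) i./2 j./2.
Proof.
rewrite /S expnS. rewrite (sum2 (fun l => E n.+1 p i l * E n.+1 q l j)) /M2 mulr_sumr; apply: eq_bigr => l _.
rewrite !E_rec /= odd_double doubleK uphalf_double; ring.
Qed.

Lemma M2_comm a b x y : M2 a b x y = (-1) ^+ anti a b * M2 b a x y.
Proof.
by case: a; case: b; case: x; case: y; rewrite /M2 /=; ring.
Qed.

Lemma sum_shift n (p q : nat -> pauli) :
  (\sum_(k < n.+1) anti (p k) (q k) = anti (p 0) (q 0) + \sum_(k < n) anti (p k.+1) (q k.+1))%N.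
Proof. by rewrite big_ord_recl. Qed.

Lemma S_comm n p q i j :
  S n p q i j = (-1) ^+ (\sum_(k < n) anti (p k) (q k))%N * S n q p i j.
Proof.
elim: n p q i j => [|n IH] p q i j.
  by rewrite big_ord0 expr0 mul1r /S /E !big_ord1 !big_ord0 !mul1r.
rewrite !S_rec IH M2_comm sum_shift exprD.
by rewrite -!mulrA; congr (_ * _); exact: mulrCA.
Qed.

Lemma M2_id a x y : M2 a a x y = (x == y)%:R.
Proof.
by case: a; case: x; case: y; rewrite /M2 /= ?mulrN ?mulNr ?mulCii ?opprK; ring.
Qed.

Lemma S_id n p i j : (i < 2 ^ n)%N -> (j < 2 ^ n)%N -> S n p p i j = (i == j)%:R.
Proof.
elim: n p i j => [|n IH] p i j.
  rewrite expn0 !ltnS !leqn0 => /eqP-> /eqP->.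
  by rewrite /S /E !big_ord1 !big_ord0 mul1r.
move=> hi hj; rewrite S_rec M2_id IH; first last.
- by rewrite ltn_half_double -mul2n -expnS.
- by rewrite ltn_half_double -mul2n -expnS.
rewrite -natrM mulnb; congr ((nat_of_bool _) %:R); apply/idP/idP.
  by case/andP=> /eqP h1 /eqP h2; rewrite -(odd_double_half i) h1 h2 odd_double_half.
by move/eqP->; rewrite !eqxx.
Qed.

Definition ext n (P : pstring n) (k : nat) : pauli :=
  if insub k is Some i then P i else pI.

Lemma extE n (P : pstring n) (i : 'I_n) : ext P i = P i.
Proof. by rewrite /ext valK. Qed.

Lemma pmxE n (P : pstring n) (i j : 'I_(2 ^ n)) : pmx P i j = E n (ext P) i j.
Proof. by rewrite mxE /E; apply: eq_bigr => k _; rewrite extE. Qed.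

Lemma pmx_mul n (P Q : pstring n) (i j : 'I_(2 ^ n)) :
  (pmx P *m pmx Q) i j = S n (ext P) (ext Q) i j.
Proof. by rewrite mxE /S; apply: eq_bigr => l _; rewrite !pmxE. Qed.

Definition ssum n (P Q : pstring n) : nat := (\sum_(k < n) anti (P k) (Q k))%N.

Lemma pmx_sign n (P Q : pstring n) :
  pmx P *m pmx Q = (-1) ^+ ssum P Q *: (pmx Q *m pmx P).
Proof.
apply/matrixP => i j; rewrite [RHS]mxE !pmx_mul S_comm /ssum.
by congr (_ ^+ _ * _); apply: eq_bigr => k _; rewrite !extE.
Qed.

Lemma pmx_sq n (P : pstring n) : pmx P *m pmx P = 1%:M.
Proof. by apply/matrixP => i j; rewrite pmx_mul S_id // mxE. Qed.

Lemma pmx_comm n (P Q : pstring n) :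
  pmx P *m pmx Q = pmx Q *m pmx P <-> ~~ odd (ssum P Q).
Proof.
rewrite pmx_sign -signr_odd; case: (odd _) => /=; last by rewrite expr0 scale1r.
split=> // h; exfalso.
have e : pmx Q *m pmx P *m (pmx P *m pmx Q) = 1%:M.
  by rewrite mulmxA -(mulmxA (pmx Q) (pmx P) (pmx P)) pmx_sq mulmx1 pmx_sq.
have : ((-1) ^+ 1 *: (pmx Q *m pmx P)) *m (pmx P *m pmx Q) = - 1%:M.
  by rewrite -scalemxAl e expr1 scaleN1r.
rewrite h e => /matrixP.
have h0 : (0 < 2 ^ n)%N by rewrite expn_gt0.
move=> /(_ (Ordinal h0) (Ordinal h0)); rewrite !mxE eqxx /= => /eqP.
by rewrite -subr_eq0 opprK (pnatr_eq0 _ 2).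
Qed.

Lemma herm_entry n (P : pstring n) (i j : 'I_(2 ^ n)) : (pmx P j i)^* = pmx P i j.
Proof.
rewrite !mxE rmorph_prod; apply: eq_bigr => k _.
case: (P k); case: (qbit i k); case: (qbit j k) => /=.
all: by rewrite ?rmorphN /= ?conjC0 ?conjC1 ?conjCi ?opprK.
Qed.

Lemma skewE N (A : 'M[algC]_N) : skew_herm A <-> forall i j, (A j i)^* = - A i j.
Proof.
split=> [h i j | h].
  by have := congr1 (fun M : 'M[algC]_N => M i j) h; rewrite !mxE.
by apply/matrixP => i j; rewrite !mxE.
Qed.

Lemma skew_pmx n (P : pstring n) : skew_herm ('i *: pmx P).
Proof. by apply/skewE => i j; rewrite mxE [in RHS]mxE rmorphM /= conjCi herm_entry mulNr. Qed.

Lemma lie_comm n (P : pstring n) :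
  lie_subalg (fun A => skew_herm A /\ pmx P *m A = A *m pmx P).
Proof.
split.
- by move=> A [].
- by split; [apply/skewE => i j; rewrite !mxE rmorph0 oppr0 | rewrite mulmx0 mul0mx].
- move=> A B [/skewE hA cA] [/skewE hB cB]; split.
    by apply/skewE => i j; rewrite !mxE rmorphD /= hA hB opprD.
  by rewrite mulmxDr mulmxDl cA cB.
- move=> r A hr [/skewE hA cA]; split.
    by apply/skewE => i j; rewrite !mxE rmorphM /= hA conj_Creal // mulrN.
  by rewrite -scalemxAr cA scalemxAl.
- move=> A B [/skewE hA cA] [/skewE hB cB]; split.
    apply/skewE => i j; rewrite !mxE rmorphB !rmorph_sum /= opprB.
    congr (_ - _); apply: eq_bigr => k _; rewrite rmorphM /= hA hB mulrNN mulrC //.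
  by rewrite mulmxBr mulmxBl !mulmxA cA cB -!mulmxA cB cA.
Qed.

Lemma anti_xI x : anti x pI = false. Proof. by case: x. Qed.

Definition RG (G : seq (pauli * pauli)) (x y : pauli) : bool :=
  all (fun ab => anti x ab.1 == anti y ab.2) G.
Definition walk (R : pauli -> pauli -> bool) n (p : nat -> pauli) :=
  forall j, (j.+1 < n)%N -> R (p j) (p j.+1).

Lemma ssum_gen n (P Q : pstring n) A B j : (j.+1 < n)%N ->
  (forall k : 'I_n, Q k = if val k == j then A else if val k == j.+1 then B else pI) ->
  ssum P Q = (anti (ext P j) A + anti (ext P j.+1) B)%N.
Proof.
move=> hj hQ; have hj0 : (j < n)%N by apply: ltnW.
rewrite /ssum (bigD1 (Ordinal hj0)) //= (bigD1 (Ordinal hj)) //=; last first.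
  by rewrite -val_eqE /= eqn_leq ltnn.
rewrite big1 ?addn0.
  rewrite !hQ /= eqxx.
  have -> : (j.+1 == j) = false by rewrite eqn_leq ltnn.
  by rewrite eqxx -(extE P (Ordinal hj0)) -(extE P (Ordinal hj)).
move=> k /andP[h1 h2]; rewrite hQ.
move: h1 h2; rewrite -!val_eqE /= => /negbTE -> /negbTE ->.
by rewrite anti_xI.
Qed.

Lemma St_walk G n (P : pstring n) : St (Gn G n) P <-> walk (RG G) n (ext P).
Proof.
split.
- move=> H j hj; apply/allP => -[A B] hAB /=.
  pose Q : pstring n := fun k => if val k == j then A else if val k == j.+1 then B else pI.
  have gQ : gen_set G Q by exists A, B, j.
  have hc := H _ (fun L _ HL => HL Q gQ).
  have : pmx P *m pmx Q = pmx Q *m pmx P.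
    move: hc; rewrite -scalemxAr -scalemxAl => /(congr1 ( *:%R 'i^-1)).
    by rewrite !scalerA mulVf ?neq0Ci // !scale1r.
  move/pmx_comm; rewrite (@ssum_gen n P Q A B j hj (fun k => erefl)) oddD !oddb.
  by case: (anti _ _); case: (anti _ _).
- move=> W M HM; apply: (proj2 (HM _ (lie_comm P) _)).
  move=> Q [A [B [j [hAB [hj hQ]]]]]; split; first exact: skew_pmx.
  rewrite -scalemxAr -scalemxAl; congr (_ *: _); apply/pmx_comm.
  rewrite (@ssum_gen n P Q A B j hj hQ) oddD !oddb.
  by move: (allP (W j hj) (A, B) hAB) => /= /eqP ->; case: anti.
Qed.

Lemma det_fwd (R : pauli -> pauli -> bool) n (P : pstring n) (c : nat -> pauli) :
  (forall x y y', R x y -> R x y' -> y = y') -> (forall k, R (c k) (c k.+1)) ->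
  ext P 0 = c 0%N -> walk R n (ext P) -> forall k : 'I_n, P k = c k.
Proof.
move=> D S0 h0 W [k hk] /=; rewrite -(extE P (Ordinal hk)) /=.
elim: k hk => [|k IH] hk //.
apply: (D _ _ _ (W k hk)); rewrite IH ?(ltnW hk) //.
Qed.

Lemma cand_bwd (R : pauli -> pauli -> bool) n (P : pstring n) (c : nat -> pauli) :
  (forall k, R (c k) (c k.+1)) -> (forall k : 'I_n, P k = c k) -> walk R n (ext P).
Proof.
move=> S0 H j hj.
have e1 := extE P (Ordinal hj); have e0 := extE P (Ordinal (ltnW hj)).
simpl in e1, e0; rewrite e1 e0 !H; exact: S0.
Qed.

Lemma walk_dead (R : pauli -> pauli -> bool) n p : (2 < n)%N -> walk R n p -> R (p 0%N) (p 1%N) && R (p 1%N) (p 2%N).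
Proof. by move=> h W; rewrite !W // ltnW. Qed.

Lemma pw_step (R : pauli -> pauli -> bool) w : (0 < size w)%N ->
  (forall r, (r < size w)%N -> R (nth pI w r) (nth pI w (r.+1 %% size w))) ->
  forall k, R (nth pI w (k %% size w)) (nth pI w (k.+1 %% size w)).
Proof.
move=> hs H k; have -> : (k.+1 %% size w = (k %% size w).+1 %% size w)%N.
  by rewrite -[(k %% size w).+1]addn1 modnDml addn1.
exact: H (ltn_pmod k hs).
Qed.

Lemma word_step (R : pauli -> pauli -> bool) w :
  (forall k, (k <= size w)%N -> R (nth pI w k) (nth pI w k.+1)) -> R pI pI ->
  forall k, R (nth pI w k) (nth pI w k.+1).
Proof.
move=> H HI k; case: (leqP k (size w)) => hk; first exact: H.
by rewrite (nth_default _ (ltnW hk)) (nth_default _ (leqW (ltnW hk))).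
Qed.

Ltac detR := let x := fresh "x" in let y := fresh "y" in let z := fresh "z" in
  let H1 := fresh "H1" in let H2 := fresh "H2" in
  move=> x y z; case: x; case: y; case: z => H1 H2;
  vm_compute in H1, H2; first [reflexivity | discriminate H1 | discriminate H2].

Ltac fin_r := let r := fresh "r" in let hr := fresh "hr" in
  move=> r hr;
  repeat (case: r hr => [|r] hr;
          [ (vm_compute in hr; match type of hr with true = true => vm_compute; reflexivity end) |]);
  exfalso; move: hr; vm_compute; discriminate.
Lemma cl_a2 n (P : pstring n) : (2 < n)%N ->
  St (Gn a2 n) P <-> [\/ isPw [:: pI] P, isPw [:: pX; pY] P, isPw [:: pY; pX] P | isPw [:: pZ] P].
Proof.
move=> hn; rewrite St_walk.
have D : forall x y y', RG a2 x y -> RG a2 x y' -> y = y' by detR.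
split.
- move=> W; have := walk_dead hn W; case E: (ext P 0%N) => Hd.
  + apply: Or41; apply: (det_fwd (c := (fun k => nth pI [:: pI] (k %% 1))) D _ E W). apply: pw_step => //; fin_r.
  + apply: Or42; apply: (det_fwd (c := (fun k => nth pI [:: pX; pY] (k %% 2))) D _ E W). apply: pw_step => //; fin_r.
  + apply: Or43; apply: (det_fwd (c := (fun k => nth pI [:: pY; pX] (k %% 2))) D _ E W). apply: pw_step => //; fin_r.
  + apply: Or44; apply: (det_fwd (c := (fun k => nth pI [:: pZ] (k %% 1))) D _ E W). apply: pw_step => //; fin_r.
- case=> H.
  + apply: (cand_bwd (c := (fun k => nth pI [:: pI] (k %% 1))) _ H). apply: pw_step => //; fin_r.
  + apply: (cand_bwd (c := (fun k => nth pI [:: pX; pY] (k %% 2))) _ H). apply: pw_step => //; fin_r.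
  + apply: (cand_bwd (c := (fun k => nth pI [:: pY; pX] (k %% 2))) _ H). apply: pw_step => //; fin_r.
  + apply: (cand_bwd (c := (fun k => nth pI [:: pZ] (k %% 1))) _ H). apply: pw_step => //; fin_r.
Qed.

Lemma cl_a3 n (P : pstring n) : (2 < n)%N ->
  St (Gn a3 n) P <-> [\/ isPw [:: pI] P, isPw [:: pX] P, isPw [:: pY; pZ] P | isPw [:: pZ; pY] P].
Proof.
move=> hn; rewrite St_walk.
have D : forall x y y', RG a3 x y -> RG a3 x y' -> y = y' by detR.
split.
- move=> W; have := walk_dead hn W; case E: (ext P 0%N) => Hd.
  + apply: Or41; apply: (det_fwd (c := (fun k => nth pI [:: pI] (k %% 1))) D _ E W). apply: pw_step => //; fin_r.
  + apply: Or42; apply: (det_fwd (c := (fun k => nth pI [:: pX] (k %% 1))) D _ E W). apply: pw_step => //; fin_r.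
  + apply: Or43; apply: (det_fwd (c := (fun k => nth pI [:: pY; pZ] (k %% 2))) D _ E W). apply: pw_step => //; fin_r.
  + apply: Or44; apply: (det_fwd (c := (fun k => nth pI [:: pZ; pY] (k %% 2))) D _ E W). apply: pw_step => //; fin_r.
- case=> H.
  + apply: (cand_bwd (c := (fun k => nth pI [:: pI] (k %% 1))) _ H). apply: pw_step => //; fin_r.
  + apply: (cand_bwd (c := (fun k => nth pI [:: pX] (k %% 1))) _ H). apply: pw_step => //; fin_r.
  + apply: (cand_bwd (c := (fun k => nth pI [:: pY; pZ] (k %% 2))) _ H). apply: pw_step => //; fin_r.
  + apply: (cand_bwd (c := (fun k => nth pI [:: pZ; pY] (k %% 2))) _ H). apply: pw_step => //; fin_r.
Qed.

Lemma cl_a6 n (P : pstring n) : (2 < n)%N ->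
  St (Gn a6 n) P <-> [\/ isPw [:: pI] P, isPw [:: pX] P, isPw [:: pY; pZ] P | isPw [:: pZ; pY] P].
Proof.
move=> hn; rewrite St_walk.
have D : forall x y y', RG a6 x y -> RG a6 x y' -> y = y' by detR.
split.
- move=> W; have := walk_dead hn W; case E: (ext P 0%N) => Hd.
  + apply: Or41; apply: (det_fwd (c := (fun k => nth pI [:: pI] (k %% 1))) D _ E W). apply: pw_step => //; fin_r.
  + apply: Or42; apply: (det_fwd (c := (fun k => nth pI [:: pX] (k %% 1))) D _ E W). apply: pw_step => //; fin_r.
  + apply: Or43; apply: (det_fwd (c := (fun k => nth pI [:: pY; pZ] (k %% 2))) D _ E W). apply: pw_step => //; fin_r.
  + apply: Or44; apply: (det_fwd (c := (fun k => nth pI [:: pZ; pY] (k %% 2))) D _ E W). apply: pw_step => //; fin_r.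
- case=> H.
  + apply: (cand_bwd (c := (fun k => nth pI [:: pI] (k %% 1))) _ H). apply: pw_step => //; fin_r.
  + apply: (cand_bwd (c := (fun k => nth pI [:: pX] (k %% 1))) _ H). apply: pw_step => //; fin_r.
  + apply: (cand_bwd (c := (fun k => nth pI [:: pY; pZ] (k %% 2))) _ H). apply: pw_step => //; fin_r.
  + apply: (cand_bwd (c := (fun k => nth pI [:: pZ; pY] (k %% 2))) _ H). apply: pw_step => //; fin_r.
Qed.

Lemma cl_a4 n (P : pstring n) : (2 < n)%N ->
  St (Gn a4 n) P <-> [\/ isPw [:: pI] P, isPw [:: pX] P, isPw [:: pY] P | isPw [:: pZ] P].
Proof.
move=> hn; rewrite St_walk.
have D : forall x y y', RG a4 x y -> RG a4 x y' -> y = y' by detR.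
split.
- move=> W; have := walk_dead hn W; case E: (ext P 0%N) => Hd.
  + apply: Or41; apply: (det_fwd (c := (fun k => nth pI [:: pI] (k %% 1))) D _ E W). apply: pw_step => //; fin_r.
  + apply: Or42; apply: (det_fwd (c := (fun k => nth pI [:: pX] (k %% 1))) D _ E W). apply: pw_step => //; fin_r.
  + apply: Or43; apply: (det_fwd (c := (fun k => nth pI [:: pY] (k %% 1))) D _ E W). apply: pw_step => //; fin_r.
  + apply: Or44; apply: (det_fwd (c := (fun k => nth pI [:: pZ] (k %% 1))) D _ E W). apply: pw_step => //; fin_r.
- case=> H.
  + apply: (cand_bwd (c := (fun k => nth pI [:: pI] (k %% 1))) _ H). apply: pw_step => //; fin_r.
  + apply: (cand_bwd (c := (fun k => nth pI [:: pX] (k %% 1))) _ H). apply: pw_step => //; fin_r.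
  + apply: (cand_bwd (c := (fun k => nth pI [:: pY] (k %% 1))) _ H). apply: pw_step => //; fin_r.
  + apply: (cand_bwd (c := (fun k => nth pI [:: pZ] (k %% 1))) _ H). apply: pw_step => //; fin_r.
Qed.

Lemma cl_a7 n (P : pstring n) : (2 < n)%N ->
  St (Gn a7 n) P <-> [\/ isPw [:: pI] P, isPw [:: pX] P, isPw [:: pY] P | isPw [:: pZ] P].
Proof.
move=> hn; rewrite St_walk.
have D : forall x y y', RG a7 x y -> RG a7 x y' -> y = y' by detR.
split.
- move=> W; have := walk_dead hn W; case E: (ext P 0%N) => Hd.
  + apply: Or41; apply: (det_fwd (c := (fun k => nth pI [:: pI] (k %% 1))) D _ E W). apply: pw_step => //; fin_r.
  + apply: Or42; apply: (det_fwd (c := (fun k => nth pI [:: pX] (k %% 1))) D _ E W). apply: pw_step => //; fin_r.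
  + apply: Or43; apply: (det_fwd (c := (fun k => nth pI [:: pY] (k %% 1))) D _ E W). apply: pw_step => //; fin_r.
  + apply: Or44; apply: (det_fwd (c := (fun k => nth pI [:: pZ] (k %% 1))) D _ E W). apply: pw_step => //; fin_r.
- case=> H.
  + apply: (cand_bwd (c := (fun k => nth pI [:: pI] (k %% 1))) _ H). apply: pw_step => //; fin_r.
  + apply: (cand_bwd (c := (fun k => nth pI [:: pX] (k %% 1))) _ H). apply: pw_step => //; fin_r.
  + apply: (cand_bwd (c := (fun k => nth pI [:: pY] (k %% 1))) _ H). apply: pw_step => //; fin_r.
  + apply: (cand_bwd (c := (fun k => nth pI [:: pZ] (k %% 1))) _ H). apply: pw_step => //; fin_r.
Qed.

Lemma cl_a5 n (P : pstring n) : (2 < n)%N ->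
  St (Gn a5 n) P <-> [\/ isPw [:: pI] P, isPw [:: pX; pY; pZ] P, isPw [:: pY; pZ; pX] P | isPw [:: pZ; pX; pY] P].
Proof.
move=> hn; rewrite St_walk.
have D : forall x y y', RG a5 x y -> RG a5 x y' -> y = y' by detR.
split.
- move=> W; have := walk_dead hn W; case E: (ext P 0%N) => Hd.
  + apply: Or41; apply: (det_fwd (c := (fun k => nth pI [:: pI] (k %% 1))) D _ E W). apply: pw_step => //; fin_r.
  + apply: Or42; apply: (det_fwd (c := (fun k => nth pI [:: pX; pY; pZ] (k %% 3))) D _ E W). apply: pw_step => //; fin_r.
  + apply: Or43; apply: (det_fwd (c := (fun k => nth pI [:: pY; pZ; pX] (k %% 3))) D _ E W). apply: pw_step => //; fin_r.
  + apply: Or44; apply: (det_fwd (c := (fun k => nth pI [:: pZ; pX; pY] (k %% 3))) D _ E W). apply: pw_step => //; fin_r.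
- case=> H.
  + apply: (cand_bwd (c := (fun k => nth pI [:: pI] (k %% 1))) _ H). apply: pw_step => //; fin_r.
  + apply: (cand_bwd (c := (fun k => nth pI [:: pX; pY; pZ] (k %% 3))) _ H). apply: pw_step => //; fin_r.
  + apply: (cand_bwd (c := (fun k => nth pI [:: pY; pZ; pX] (k %% 3))) _ H). apply: pw_step => //; fin_r.
  + apply: (cand_bwd (c := (fun k => nth pI [:: pZ; pX; pY] (k %% 3))) _ H). apply: pw_step => //; fin_r.
Qed.

Lemma cl_a10 n (P : pstring n) : (2 < n)%N ->
  St (Gn a10 n) P <-> [\/ isPw [:: pI] P, isPw [:: pX; pY; pZ] P, isPw [:: pY; pZ; pX] P | isPw [:: pZ; pX; pY] P].
Proof.
move=> hn; rewrite St_walk.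
have D : forall x y y', RG a10 x y -> RG a10 x y' -> y = y' by detR.
split.
- move=> W; have := walk_dead hn W; case E: (ext P 0%N) => Hd.
  + apply: Or41; apply: (det_fwd (c := (fun k => nth pI [:: pI] (k %% 1))) D _ E W). apply: pw_step => //; fin_r.
  + apply: Or42; apply: (det_fwd (c := (fun k => nth pI [:: pX; pY; pZ] (k %% 3))) D _ E W). apply: pw_step => //; fin_r.
  + apply: Or43; apply: (det_fwd (c := (fun k => nth pI [:: pY; pZ; pX] (k %% 3))) D _ E W). apply: pw_step => //; fin_r.
  + apply: Or44; apply: (det_fwd (c := (fun k => nth pI [:: pZ; pX; pY] (k %% 3))) D _ E W). apply: pw_step => //; fin_r.
- case=> H.
  + apply: (cand_bwd (c := (fun k => nth pI [:: pI] (k %% 1))) _ H). apply: pw_step => //; fin_r.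
  + apply: (cand_bwd (c := (fun k => nth pI [:: pX; pY; pZ] (k %% 3))) _ H). apply: pw_step => //; fin_r.
  + apply: (cand_bwd (c := (fun k => nth pI [:: pY; pZ; pX] (k %% 3))) _ H). apply: pw_step => //; fin_r.
  + apply: (cand_bwd (c := (fun k => nth pI [:: pZ; pX; pY] (k %% 3))) _ H). apply: pw_step => //; fin_r.
Qed.

Lemma cl_a8 n (P : pstring n) : (2 < n)%N ->
  St (Gn a8 n) P <-> [\/ isPw [:: pI] P, isPw [:: pY] P, isWord [:: pX] P | isZYY P].
Proof.
move=> hn; rewrite St_walk.
have D : forall x y y', RG a8 x y -> RG a8 x y' -> y = y' by detR.
split.
- move=> W; have := walk_dead hn W; case E: (ext P 0%N) => Hd.
  + apply: Or41; apply: (det_fwd (c := (fun k => nth pI [:: pI] (k %% 1))) D _ E W). apply: pw_step => //; fin_r.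
  + apply: Or43; apply: (det_fwd (c := (fun k => nth pI [:: pX] k)) D _ E W). apply: word_step; [fin_r | vm_compute; reflexivity].
  + apply: Or42; apply: (det_fwd (c := (fun k => nth pI [:: pY] (k %% 1))) D _ E W). apply: pw_step => //; fin_r.
  + apply: Or44; apply: (det_fwd (c := (fun k => if k == 0%N then pZ else pY)) D _ E W). case=> [|k]; vm_compute; reflexivity.
- case=> H.
  + apply: (cand_bwd (c := (fun k => nth pI [:: pI] (k %% 1))) _ H). apply: pw_step => //; fin_r.
  + apply: (cand_bwd (c := (fun k => nth pI [:: pY] (k %% 1))) _ H). apply: pw_step => //; fin_r.
  + apply: (cand_bwd (c := (fun k => nth pI [:: pX] k)) _ H). apply: word_step; [fin_r | vm_compute; reflexivity].
  + apply: (cand_bwd (c := (fun k => if k == 0%N then pZ else pY)) _ H). case=> [|k]; vm_compute; reflexivity.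
Qed.

Lemma cl_a9 n (P : pstring n) : (2 < n)%N ->
  St (Gn a9 n) P <-> [\/ isPw [:: pI] P, isWord [:: pX] P, isWord [:: pY; pX] P | isWord [:: pZ; pX] P].
Proof.
move=> hn; rewrite St_walk.
have D : forall x y y', RG a9 x y -> RG a9 x y' -> y = y' by detR.
split.
- move=> W; have := walk_dead hn W; case E: (ext P 0%N) => Hd.
  + apply: Or41; apply: (det_fwd (c := (fun k => nth pI [:: pI] (k %% 1))) D _ E W). apply: pw_step => //; fin_r.
  + apply: Or42; apply: (det_fwd (c := (fun k => nth pI [:: pX] k)) D _ E W). apply: word_step; [fin_r | vm_compute; reflexivity].
  + apply: Or43; apply: (det_fwd (c := (fun k => nth pI [:: pY; pX] k)) D _ E W). apply: word_step; [fin_r | vm_compute; reflexivity].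
  + apply: Or44; apply: (det_fwd (c := (fun k => nth pI [:: pZ; pX] k)) D _ E W). apply: word_step; [fin_r | vm_compute; reflexivity].
- case=> H.
  + apply: (cand_bwd (c := (fun k => nth pI [:: pI] (k %% 1))) _ H). apply: pw_step => //; fin_r.
  + apply: (cand_bwd (c := (fun k => nth pI [:: pX] k)) _ H). apply: word_step; [fin_r | vm_compute; reflexivity].
  + apply: (cand_bwd (c := (fun k => nth pI [:: pY; pX] k)) _ H). apply: word_step; [fin_r | vm_compute; reflexivity].
  + apply: (cand_bwd (c := (fun k => nth pI [:: pZ; pX] k)) _ H). apply: word_step; [fin_r | vm_compute; reflexivity].
Qed.

Lemma cl_a13 n (P : pstring n) : (2 < n)%N ->
  St (Gn a13 n) P <-> isPw [:: pI] P \/ isPw [:: pX] P.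
Proof.
move=> hn; rewrite St_walk.
have D : forall x y y', RG a13 x y -> RG a13 x y' -> y = y' by detR.
split.
- move=> W; have := walk_dead hn W; case E: (ext P 0%N) => Hd.
  + left; apply: (det_fwd (c := (fun k => nth pI [:: pI] (k %% 1))) D _ E W). apply: pw_step => //; fin_r.
  + right; apply: (det_fwd (c := (fun k => nth pI [:: pX] (k %% 1))) D _ E W). apply: pw_step => //; fin_r.
  + exfalso; move: Hd; case: (ext P 1%N); case: (ext P 2%N); vm_compute; discriminate.
  + exfalso; move: Hd; case: (ext P 1%N); case: (ext P 2%N); vm_compute; discriminate.
- case=> H.
  + apply: (cand_bwd (c := (fun k => nth pI [:: pI] (k %% 1))) _ H). apply: pw_step => //; fin_r.
  + apply: (cand_bwd (c := (fun k => nth pI [:: pX] (k %% 1))) _ H). apply: pw_step => //; fin_r.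
Qed.

Lemma cl_a20 n (P : pstring n) : (2 < n)%N ->
  St (Gn a20 n) P <-> isPw [:: pI] P \/ isPw [:: pX] P.
Proof.
move=> hn; rewrite St_walk.
have D : forall x y y', RG a20 x y -> RG a20 x y' -> y = y' by detR.
split.
- move=> W; have := walk_dead hn W; case E: (ext P 0%N) => Hd.
  + left; apply: (det_fwd (c := (fun k => nth pI [:: pI] (k %% 1))) D _ E W). apply: pw_step => //; fin_r.
  + right; apply: (det_fwd (c := (fun k => nth pI [:: pX] (k %% 1))) D _ E W). apply: pw_step => //; fin_r.
  + exfalso; move: Hd; case: (ext P 1%N); case: (ext P 2%N); vm_compute; discriminate.
  + exfalso; move: Hd; case: (ext P 1%N); case: (ext P 2%N); vm_compute; discriminate.
- case=> H.
  + apply: (cand_bwd (c := (fun k => nth pI [:: pI] (k %% 1))) _ H). apply: pw_step => //; fin_r.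
  + apply: (cand_bwd (c := (fun k => nth pI [:: pX] (k %% 1))) _ H). apply: pw_step => //; fin_r.
Qed.

Lemma cl_a14 n (P : pstring n) : (2 < n)%N ->
  St (Gn a14 n) P <-> isPw [:: pI] P \/ isPw [:: pZ] P.
Proof.
move=> hn; rewrite St_walk.
have D : forall x y y', RG a14 x y -> RG a14 x y' -> y = y' by detR.
split.
- move=> W; have := walk_dead hn W; case E: (ext P 0%N) => Hd.
  + left; apply: (det_fwd (c := (fun k => nth pI [:: pI] (k %% 1))) D _ E W). apply: pw_step => //; fin_r.
  + exfalso; move: Hd; case: (ext P 1%N); case: (ext P 2%N); vm_compute; discriminate.
  + exfalso; move: Hd; case: (ext P 1%N); case: (ext P 2%N); vm_compute; discriminate.
  + right; apply: (det_fwd (c := (fun k => nth pI [:: pZ] (k %% 1))) D _ E W). apply: pw_step => //; fin_r.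
- case=> H.
  + apply: (cand_bwd (c := (fun k => nth pI [:: pI] (k %% 1))) _ H). apply: pw_step => //; fin_r.
  + apply: (cand_bwd (c := (fun k => nth pI [:: pZ] (k %% 1))) _ H). apply: pw_step => //; fin_r.
Qed.

Lemma cl_a15 n (P : pstring n) : (2 < n)%N ->
  St (Gn a15 n) P <-> isPw [:: pI] P \/ isWord [:: pX] P.
Proof.
move=> hn; rewrite St_walk.
have D : forall x y y', RG a15 x y -> RG a15 x y' -> y = y' by detR.
split.
- move=> W; have := walk_dead hn W; case E: (ext P 0%N) => Hd.
  + left; apply: (det_fwd (c := (fun k => nth pI [:: pI] (k %% 1))) D _ E W). apply: pw_step => //; fin_r.
  + right; apply: (det_fwd (c := (fun k => nth pI [:: pX] k)) D _ E W). apply: word_step; [fin_r | vm_compute; reflexivity].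
  + exfalso; move: Hd; case: (ext P 1%N); case: (ext P 2%N); vm_compute; discriminate.
  + exfalso; move: Hd; case: (ext P 1%N); case: (ext P 2%N); vm_compute; discriminate.
- case=> H.
  + apply: (cand_bwd (c := (fun k => nth pI [:: pI] (k %% 1))) _ H). apply: pw_step => //; fin_r.
  + apply: (cand_bwd (c := (fun k => nth pI [:: pX] k)) _ H). apply: word_step; [fin_r | vm_compute; reflexivity].
Qed.

Lemma cl_b2 n (P : pstring n) : (2 < n)%N ->
  St (Gn b2 n) P <-> isPw [:: pI] P \/ isWord [:: pX] P.
Proof.
move=> hn; rewrite St_walk.
have D : forall x y y', RG b2 x y -> RG b2 x y' -> y = y' by detR.
split.
- move=> W; have := walk_dead hn W; case E: (ext P 0%N) => Hd.
  + left; apply: (det_fwd (c := (fun k => nth pI [:: pI] (k %% 1))) D _ E W). apply: pw_step => //; fin_r.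
  + right; apply: (det_fwd (c := (fun k => nth pI [:: pX] k)) D _ E W). apply: word_step; [fin_r | vm_compute; reflexivity].
  + exfalso; move: Hd; case: (ext P 1%N); case: (ext P 2%N); vm_compute; discriminate.
  + exfalso; move: Hd; case: (ext P 1%N); case: (ext P 2%N); vm_compute; discriminate.
- case=> H.
  + apply: (cand_bwd (c := (fun k => nth pI [:: pI] (k %% 1))) _ H). apply: pw_step => //; fin_r.
  + apply: (cand_bwd (c := (fun k => nth pI [:: pX] k)) _ H). apply: word_step; [fin_r | vm_compute; reflexivity].
Qed.

Lemma cl_b4 n (P : pstring n) : (2 < n)%N ->
  St (Gn b4 n) P <-> isPw [:: pI] P \/ isWord [:: pX] P.
Proof.
move=> hn; rewrite St_walk.
have D : forall x y y', RG b4 x y -> RG b4 x y' -> y = y' by detR.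
split.
- move=> W; have := walk_dead hn W; case E: (ext P 0%N) => Hd.
  + left; apply: (det_fwd (c := (fun k => nth pI [:: pI] (k %% 1))) D _ E W). apply: pw_step => //; fin_r.
  + right; apply: (det_fwd (c := (fun k => nth pI [:: pX] k)) D _ E W). apply: word_step; [fin_r | vm_compute; reflexivity].
  + exfalso; move: Hd; case: (ext P 1%N); case: (ext P 2%N); vm_compute; discriminate.
  + exfalso; move: Hd; case: (ext P 1%N); case: (ext P 2%N); vm_compute; discriminate.
- case=> H.
  + apply: (cand_bwd (c := (fun k => nth pI [:: pI] (k %% 1))) _ H). apply: pw_step => //; fin_r.
  + apply: (cand_bwd (c := (fun k => nth pI [:: pX] k)) _ H). apply: word_step; [fin_r | vm_compute; reflexivity].
Qed.

Lemma cl_a11 n (P : pstring n) : (2 < n)%N ->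
  St (Gn a11 n) P <-> isPw [:: pI] P.
Proof.
move=> hn; rewrite St_walk.
have D : forall x y y', RG a11 x y -> RG a11 x y' -> y = y' by detR.
split.
- move=> W; have := walk_dead hn W; case E: (ext P 0%N) => Hd.
  + apply: (det_fwd (c := (fun k => nth pI [:: pI] (k %% 1))) D _ E W). apply: pw_step => //; fin_r.
  + exfalso; move: Hd; case: (ext P 1%N); case: (ext P 2%N); vm_compute; discriminate.
  + exfalso; move: Hd; case: (ext P 1%N); case: (ext P 2%N); vm_compute; discriminate.
  + exfalso; move: Hd; case: (ext P 1%N); case: (ext P 2%N); vm_compute; discriminate.
- move=> H; apply: (cand_bwd (c := (fun k => nth pI [:: pI] (k %% 1))) _ H). apply: pw_step => //; fin_r.
Qed.

Lemma cl_a12 n (P : pstring n) : (2 < n)%N ->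
  St (Gn a12 n) P <-> isPw [:: pI] P.
Proof.
move=> hn; rewrite St_walk.
have D : forall x y y', RG a12 x y -> RG a12 x y' -> y = y' by detR.
split.
- move=> W; have := walk_dead hn W; case E: (ext P 0%N) => Hd.
  + apply: (det_fwd (c := (fun k => nth pI [:: pI] (k %% 1))) D _ E W). apply: pw_step => //; fin_r.
  + exfalso; move: Hd; case: (ext P 1%N); case: (ext P 2%N); vm_compute; discriminate.
  + exfalso; move: Hd; case: (ext P 1%N); case: (ext P 2%N); vm_compute; discriminate.
  + exfalso; move: Hd; case: (ext P 1%N); case: (ext P 2%N); vm_compute; discriminate.
- move=> H; apply: (cand_bwd (c := (fun k => nth pI [:: pI] (k %% 1))) _ H). apply: pw_step => //; fin_r.
Qed.

Lemma cl_a16 n (P : pstring n) : (2 < n)%N ->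
  St (Gn a16 n) P <-> isPw [:: pI] P.
Proof.
move=> hn; rewrite St_walk.
have D : forall x y y', RG a16 x y -> RG a16 x y' -> y = y' by detR.
split.
- move=> W; have := walk_dead hn W; case E: (ext P 0%N) => Hd.
  + apply: (det_fwd (c := (fun k => nth pI [:: pI] (k %% 1))) D _ E W). apply: pw_step => //; fin_r.
  + exfalso; move: Hd; case: (ext P 1%N); case: (ext P 2%N); vm_compute; discriminate.
  + exfalso; move: Hd; case: (ext P 1%N); case: (ext P 2%N); vm_compute; discriminate.
  + exfalso; move: Hd; case: (ext P 1%N); case: (ext P 2%N); vm_compute; discriminate.
- move=> H; apply: (cand_bwd (c := (fun k => nth pI [:: pI] (k %% 1))) _ H). apply: pw_step => //; fin_r.
Qed.

Lemma cl_a17 n (P : pstring n) : (2 < n)%N ->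
  St (Gn a17 n) P <-> isPw [:: pI] P.
Proof.
move=> hn; rewrite St_walk.
have D : forall x y y', RG a17 x y -> RG a17 x y' -> y = y' by detR.
split.
- move=> W; have := walk_dead hn W; case E: (ext P 0%N) => Hd.
  + apply: (det_fwd (c := (fun k => nth pI [:: pI] (k %% 1))) D _ E W). apply: pw_step => //; fin_r.
  + exfalso; move: Hd; case: (ext P 1%N); case: (ext P 2%N); vm_compute; discriminate.
  + exfalso; move: Hd; case: (ext P 1%N); case: (ext P 2%N); vm_compute; discriminate.
  + exfalso; move: Hd; case: (ext P 1%N); case: (ext P 2%N); vm_compute; discriminate.
- move=> H; apply: (cand_bwd (c := (fun k => nth pI [:: pI] (k %% 1))) _ H). apply: pw_step => //; fin_r.
Qed.

Lemma cl_a18 n (P : pstring n) : (2 < n)%N ->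
  St (Gn a18 n) P <-> isPw [:: pI] P.
Proof.
move=> hn; rewrite St_walk.
have D : forall x y y', RG a18 x y -> RG a18 x y' -> y = y' by detR.
split.
- move=> W; have := walk_dead hn W; case E: (ext P 0%N) => Hd.
  + apply: (det_fwd (c := (fun k => nth pI [:: pI] (k %% 1))) D _ E W). apply: pw_step => //; fin_r.
  + exfalso; move: Hd; case: (ext P 1%N); case: (ext P 2%N); vm_compute; discriminate.
  + exfalso; move: Hd; case: (ext P 1%N); case: (ext P 2%N); vm_compute; discriminate.
  + exfalso; move: Hd; case: (ext P 1%N); case: (ext P 2%N); vm_compute; discriminate.
- move=> H; apply: (cand_bwd (c := (fun k => nth pI [:: pI] (k %% 1))) _ H). apply: pw_step => //; fin_r.
Qed.

Lemma cl_a19 n (P : pstring n) : (2 < n)%N ->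
  St (Gn a19 n) P <-> isPw [:: pI] P.
Proof.
move=> hn; rewrite St_walk.
have D : forall x y y', RG a19 x y -> RG a19 x y' -> y = y' by detR.
split.
- move=> W; have := walk_dead hn W; case E: (ext P 0%N) => Hd.
  + apply: (det_fwd (c := (fun k => nth pI [:: pI] (k %% 1))) D _ E W). apply: pw_step => //; fin_r.
  + exfalso; move: Hd; case: (ext P 1%N); case: (ext P 2%N); vm_compute; discriminate.
  + exfalso; move: Hd; case: (ext P 1%N); case: (ext P 2%N); vm_compute; discriminate.
  + exfalso; move: Hd; case: (ext P 1%N); case: (ext P 2%N); vm_compute; discriminate.
- move=> H; apply: (cand_bwd (c := (fun k => nth pI [:: pI] (k %% 1))) _ H). apply: pw_step => //; fin_r.
Qed.

Lemma cl_a21 n (P : pstring n) : (2 < n)%N ->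
  St (Gn a21 n) P <-> isPw [:: pI] P.
Proof.
move=> hn; rewrite St_walk.
have D : forall x y y', RG a21 x y -> RG a21 x y' -> y = y' by detR.
split.
- move=> W; have := walk_dead hn W; case E: (ext P 0%N) => Hd.
  + apply: (det_fwd (c := (fun k => nth pI [:: pI] (k %% 1))) D _ E W). apply: pw_step => //; fin_r.
  + exfalso; move: Hd; case: (ext P 1%N); case: (ext P 2%N); vm_compute; discriminate.
  + exfalso; move: Hd; case: (ext P 1%N); case: (ext P 2%N); vm_compute; discriminate.
  + exfalso; move: Hd; case: (ext P 1%N); case: (ext P 2%N); vm_compute; discriminate.
- move=> H; apply: (cand_bwd (c := (fun k => nth pI [:: pI] (k %% 1))) _ H). apply: pw_step => //; fin_r.
Qed.

Lemma cl_a22 n (P : pstring n) : (2 < n)%N ->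
  St (Gn a22 n) P <-> isPw [:: pI] P.
Proof.
move=> hn; rewrite St_walk.
have D : forall x y y', RG a22 x y -> RG a22 x y' -> y = y' by detR.
split.
- move=> W; have := walk_dead hn W; case E: (ext P 0%N) => Hd.
  + apply: (det_fwd (c := (fun k => nth pI [:: pI] (k %% 1))) D _ E W). apply: pw_step => //; fin_r.
  + exfalso; move: Hd; case: (ext P 1%N); case: (ext P 2%N); vm_compute; discriminate.
  + exfalso; move: Hd; case: (ext P 1%N); case: (ext P 2%N); vm_compute; discriminate.
  + exfalso; move: Hd; case: (ext P 1%N); case: (ext P 2%N); vm_compute; discriminate.
- move=> H; apply: (cand_bwd (c := (fun k => nth pI [:: pI] (k %% 1))) _ H). apply: pw_step => //; fin_r.
Qed.

Lemma cl_b3 n (P : pstring n) : (2 < n)%N ->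
  St (Gn b3 n) P <-> isPw [:: pI] P.
Proof.
move=> hn; rewrite St_walk.
have D : forall x y y', RG b3 x y -> RG b3 x y' -> y = y' by detR.
split.
- move=> W; have := walk_dead hn W; case E: (ext P 0%N) => Hd.
  + apply: (det_fwd (c := (fun k => nth pI [:: pI] (k %% 1))) D _ E W). apply: pw_step => //; fin_r.
  + exfalso; move: Hd; case: (ext P 1%N); case: (ext P 2%N); vm_compute; discriminate.
  + exfalso; move: Hd; case: (ext P 1%N); case: (ext P 2%N); vm_compute; discriminate.
  + exfalso; move: Hd; case: (ext P 1%N); case: (ext P 2%N); vm_compute; discriminate.
- move=> H; apply: (cand_bwd (c := (fun k => nth pI [:: pI] (k %% 1))) _ H). apply: pw_step => //; fin_r.
Qed.

Definition peqb (x y : pauli) : bool :=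
  match x, y with pI,pI | pX,pX | pY,pY | pZ,pZ => true | _,_ => false end.
Lemma peqE (x y : pauli) : (x == y) = peqb x y.
Proof. by apply/eqP/idP; case: x; case: y. Qed.
Lemma inIX x : (x \in [:: pI; pX]) = ~~ anti x pX.
Proof. by rewrite !inE !peqE; case: x. Qed.
Lemma inYZ x : (x \in [:: pY; pZ]) = anti x pX.
Proof. by rewrite !inE !peqE; case: x. Qed.

Lemma cl_a0 n (P : pstring n) : (2 < n)%N ->
  St (Gn a0 n) P <-> letters_in [:: pI; pX] P \/ letters_in [:: pY; pZ] P.
Proof.
move=> hn; rewrite St_walk.
have R0 : forall x y, RG a0 x y = (anti x pX == anti y pX) by move=> x y; rewrite /RG /= andbT.
split.
- move=> W.
  have C : forall k, (k < n)%N -> anti (ext P k) pX = anti (ext P 0%N) pX.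
    elim=> [//|k IH] hk; rewrite -IH ?(ltnW hk) //.
    by have := W k hk; rewrite R0 => /eqP ->.
  case E: (anti (ext P 0%N) pX); [right|left] => k; by rewrite ?inIX ?inYZ -extE C // E.
- move=> H j hj; rewrite R0.
  have e1 := extE P (Ordinal hj); have e0 := extE P (Ordinal (ltnW hj)).
  simpl in e1, e0; rewrite e1 e0.
  case: H => H; move: (H (Ordinal hj)) (H (Ordinal (ltnW hj))).
    by rewrite !inIX => /negbTE -> /negbTE ->.
  by rewrite !inYZ => -> ->.
Qed.

Lemma cl_b01 G n (P : pstring n) : (2 < n)%N ->
  (forall x y, RG G x y = ~~ anti x pX && ~~ anti y pX) ->
  St (Gn G n) P <-> letters_in [:: pI; pX] P.
Proof.
move=> hn R0; rewrite St_walk.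
split.
- move=> W [k hk]; rewrite inIX -(extE P (Ordinal hk)) /=.
  case: (ltnP k.+1 n) => h1.
    by have := W k h1; rewrite R0 => /andP[].
  case: k hk h1 => [|k] hk h1; first by have := leq_trans hn h1.
  by have := W k hk; rewrite R0 => /andP[].
- move=> H j hj; rewrite R0.
  have e1 := extE P (Ordinal hj); have e0 := extE P (Ordinal (ltnW hj)).
  simpl in e1, e0; rewrite e1 e0.
  by move: (H (Ordinal hj)) (H (Ordinal (ltnW hj))); rewrite !inIX => -> ->.
Qed.

Lemma cl_b0 n (P : pstring n) : (2 < n)%N -> St (Gn b0 n) P <-> letters_in [:: pI; pX] P.
Proof. move=> hn; apply: cl_b01 => // x y; by case: x; case: y. Qed.
Lemma cl_b1 n (P : pstring n) : (2 < n)%N -> St (Gn b1 n) P <-> letters_in [:: pI; pX] P.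
Proof. move=> hn; apply: cl_b01 => // x y; by case: x; case: y. Qed.

Theorem mainTheorem8 (n : nat) (hn : (3 <= n)%N) :
  (forall P, St (Gn a0 n) P <->
     letters_in [:: pI; pX] P \/ letters_in [:: pY; pZ] P) /\
  (forall P, St (Gn a2 n) P <->
     [\/ isPw [:: pI] P, isPw [:: pX; pY] P, isPw [:: pY; pX] P | isPw [:: pZ] P]) /\
  (forall G, G \in [:: a3; a6] -> forall P, St (Gn G n) P <->
     [\/ isPw [:: pI] P, isPw [:: pX] P, isPw [:: pY; pZ] P | isPw [:: pZ; pY] P]) /\
  (forall G, G \in [:: a4; a7] -> forall P, St (Gn G n) P <->
     [\/ isPw [:: pI] P, isPw [:: pX] P, isPw [:: pY] P | isPw [:: pZ] P]) /\
  (forall G, G \in [:: a5; a10] -> forall P, St (Gn G n) P <->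
     [\/ isPw [:: pI] P, isPw [:: pX; pY; pZ] P, isPw [:: pY; pZ; pX] P
       | isPw [:: pZ; pX; pY] P]) /\
  (forall P, St (Gn a8 n) P <->
     [\/ isPw [:: pI] P, isPw [:: pY] P, isWord [:: pX] P | isZYY P]) /\
  (forall P, St (Gn a9 n) P <->
     [\/ isPw [:: pI] P, isWord [:: pX] P, isWord [:: pY; pX] P | isWord [:: pZ; pX] P]) /\
  (forall G, G \in [:: a13; a20] -> forall P, St (Gn G n) P <->
     isPw [:: pI] P \/ isPw [:: pX] P) /\
  (forall P, St (Gn a14 n) P <-> isPw [:: pI] P \/ isPw [:: pZ] P) /\
  (forall G, G \in [:: a15; b2; b4] -> forall P, St (Gn G n) P <->
     isPw [:: pI] P \/ isWord [:: pX] P) /\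
  (forall G, G \in [:: b0; b1] -> forall P, St (Gn G n) P <->
     letters_in [:: pI; pX] P) /\
  (forall G, G \in [:: a11; a12; a16; a17; a18; a19; a21; a22; b3] ->
     forall P, St (Gn G n) P <-> isPw [:: pI] P).
Proof.
have hn' : (2 < n)%N by [].
split; first by move=> P; exact: cl_a0.
split; first by move=> P; exact: cl_a2.
split; first by move=> G; rewrite !inE => /orP[/eqP->|/eqP->] P; [exact: cl_a3|exact: cl_a6].
split; first by move=> G; rewrite !inE => /orP[/eqP->|/eqP->] P; [exact: cl_a4|exact: cl_a7].
split; first by move=> G; rewrite !inE => /orP[/eqP->|/eqP->] P; [exact: cl_a5|exact: cl_a10].
split; first by move=> P; exact: cl_a8.
split; first by move=> P; exact: cl_a9.
split; first by move=> G; rewrite !inE => /orP[/eqP->|/eqP->] P; [exact: cl_a13|exact: cl_a20].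
split; first by move=> P; exact: cl_a14.
split; first by move=> G; rewrite !inE => /orP[/eqP->|/orP[/eqP->|/eqP->]] P;
  [exact: cl_a15|exact: cl_b2|exact: cl_b4].
split; first by move=> G; rewrite !inE => /orP[/eqP->|/eqP->] P; [exact: cl_b0|exact: cl_b1].
move=> G; rewrite !inE => HG P.
repeat (case/orP: HG => HG); move/eqP: HG => ->.
all: first [ exact: cl_a11 hn' | exact: cl_a12 hn'
  | exact: cl_a16 hn' | exact: cl_a17 hn' | exact: cl_a18 hn' | exact: cl_a19 hn'
  | exact: cl_a21 hn' | exact: cl_a22 hn' | exact: cl_b3 hn' ].
Qed.
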